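(* Let $R$ be a finite commutative local ring and $G=\mathrm{GL}_n(R)$. For each $w\in W$, the map \[ \phi_w: e_{U^w}e_{V^w}\mathbb{C}[G]\to e_Ve_U\mathbb{C}[G],\qquad x\mapsto e_Vx, \] is a well-defined isomorphism of $\mathbb{C}[L]$-$\mathbb{C}[G]$ bimodules, where $U^w=w^{-1}Uw$, $V^w=w^{-1}Vw$.
   Context: $L$ is the subgroup of diagonal matrices, $U$ (resp. $V$) the subgroup of upper (resp. lower) unitriangular matrices, and $W$ the group of permutation matrices in $G$. For a subgroup $H\subseteq G$, $e_H=|H|^{-1}\sum_{h\in H}h\in\mathbb{C}[G]$. Since $L$ normalises $U,V,U^w,V^w$, the corresponding idempotents commute with $\mathbb{C}[L]$, so both spaces are $\mathbb{C}[L]$-$\mathbb{C}[G]$ bimodules under left and right multiplication. *)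

(* Defs.v *)
From HB Require Import structures.
From mathcomp Require Import all_boot all_order all_algebra all_fingroup all_field.
Set Implicit Arguments. Unset Strict Implicit. Unset Printing Implicit Defensive.
Import GRing.Theory Num.Theory.
Local Open Scope ring_scope.

(* A commutative ring R (nonzero, as MathComp rings are) is local iff its
   non-units are closed under addition (equivalently: it has a unique maximal
   ideal, namely the set of non-units). *)
Definition local_ring (R : comUnitRingType) : Prop :=
  forall x y : R, x \notin GRing.unit -> y \notin GRing.unit ->
    x + y \notin GRing.unit.

Notation galg gT := {ffun gT -> algC} (only parsing).

Definition gmul (gT : finGroupType) (a b : galg gT) : galg gT :=
  [ffun g => \sum_(h : gT) a h * b (h^-1 * g)%g].

Definition gdelta (gT : finGroupType) (g : gT) : galg gT :=
  [ffun x => (x == g)%:R].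

Definition gscale (gT : finGroupType) (c : algC) (a : galg gT) : galg gT :=
  [ffun g => c * a g].

Definition eH (gT : finGroupType) (H : {set gT}) : galg gT :=
  gscale (#|H|%:R)^-1 (\sum_(h in H) gdelta h).

Definition in_lideal (gT : finGroupType) (a x : galg gT) : Prop :=
  exists y, x = gmul a y.

(* elements of C[H] seen inside C[G]: supported on H *)
Definition supported_on (gT : finGroupType) (H : {set gT}) (a : galg gT) : Prop :=
  forall g, g \notin H -> a g = 0.

Section Subgroups.
Variables (n : nat) (R : finComUnitRingType).
Local Notation G := {'GL_n.+1[R]}.

Definition diagL : {set G} := [set g : G | is_diag_mx (GLval g)].
Definition upperU : {set G} :=
  [set g : G | [forall i : 'I_n.+1, forall j : 'I_n.+1,
     (GLval g i j == ((i == j)%:R : R)) || (i < j)%N]].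
Definition lowerV : {set G} :=
  [set g : G | [forall i : 'I_n.+1, forall j : 'I_n.+1,
     (GLval g i j == ((i == j)%:R : R)) || (j < i)%N]].
Definition permW : {set G} := [set g : G | is_perm_mx (GLval g)].
End Subgroups.

(* Main.v *)
Require Import Defs.
From mathcomp Require Import all_boot all_order all_algebra all_fingroup all_field.
From mathcomp Require Import ring.
Set Implicit Arguments. Unset Strict Implicit. Unset Printing Implicit Defensive.
Import GRing.Theory Num.Theory.
Local Open Scope ring_scope.


Section GA.
Variable gT : finGroupType.
Implicit Types a b c : {ffun gT -> algC}.

Lemma gmulE a b g : gmul a b g = \sum_h a h * b (h^-1 * g)%g.
Proof. by rewrite ffunE. Qed.

Lemma gmulA a b c : gmul (gmul a b) c = gmul a (gmul b c).
Proof.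
apply/ffunP=> g; rewrite !ffunE.
under eq_bigr do rewrite ffunE big_distrl /=.
rewrite exchange_big /=; apply: eq_bigr => k _.
rewrite ffunE big_distrr /= (reindex_inj (mulgI k)) /=.
by apply: eq_bigr => h _; rewrite mulrA mulKg invMg -mulgA.
Qed.

Lemma gmulDr a b c : gmul a (b + c) = gmul a b + gmul a c.
Proof.
by apply/ffunP=> g; rewrite !ffunE -big_split; apply: eq_bigr => h _; rewrite ffunE mulrDr.
Qed.

Lemma gmulDl a b c : gmul (a + b) c = gmul a c + gmul b c.
Proof.
by apply/ffunP=> g; rewrite !ffunE -big_split; apply: eq_bigr => h _; rewrite ffunE mulrDl.
Qed.

Lemma gmulNr a b : gmul a (- b) = - gmul a b.
Proof.
by apply/ffunP=> g; rewrite !ffunE -sumrN; apply: eq_bigr => h _; rewrite ffunE mulrN.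
Qed.

Lemma gmulNl a b : gmul (- a) b = - gmul a b.
Proof.
by apply/ffunP=> g; rewrite !ffunE -sumrN; apply: eq_bigr => h _; rewrite ffunE mulNr.
Qed.

Lemma gmulBr a b c : gmul a (b - c) = gmul a b - gmul a c.
Proof. by rewrite gmulDr gmulNr. Qed.

Lemma gmulBl a b c : gmul (a - b) c = gmul a c - gmul b c.
Proof. by rewrite gmulDl gmulNl. Qed.

Lemma gmul0r a : gmul 0 a = 0.
Proof. by apply/ffunP=> g; rewrite !ffunE big1 // => h _; rewrite ffunE mul0r. Qed.

Lemma gmulr0 a : gmul a 0 = 0.
Proof. by apply/ffunP=> g; rewrite !ffunE big1 // => h _; rewrite ffunE mulr0. Qed.

Lemma gmulZl (k : algC) a b : gmul (gscale k a) b = gscale k (gmul a b).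
Proof.
by apply/ffunP=> g; rewrite !ffunE big_distrr; apply: eq_bigr => h _; rewrite ffunE -mulrA.
Qed.

Lemma gmulZr (k : algC) a b : gmul a (gscale k b) = gscale k (gmul a b).
Proof.
apply/ffunP=> g; rewrite !ffunE big_distrr; apply: eq_bigr => h _; rewrite ffunE.
by rewrite /= mulrA [a h * k]mulrC mulrA.
Qed.

Lemma gmul1r a : gmul (gdelta 1%g) a = a.
Proof.
apply/ffunP=> g; rewrite ffunE (bigD1 1%g) //= big1 => [|h /negPf nh]; last by rewrite ffunE nh mul0r.
by rewrite ffunE eqxx mul1r invg1 mul1g addr0.
Qed.

Lemma gmulr1 a : gmul a (gdelta 1%g) = a.
Proof.
apply/ffunP=> g; rewrite ffunE (bigD1 g) //= big1 => [|h nh]; last first.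
  by rewrite ffunE -eq_mulVg1 (negPf nh) mulr0.
by rewrite ffunE mulVg eqxx mulr1 addr0.
Qed.

Lemma gscaleDr (k : algC) a b : gscale k (a + b) = gscale k a + gscale k b.
Proof. by apply/ffunP=> g; rewrite !ffunE mulrDr. Qed.

Lemma gscaleA (k l : algC) a : gscale k (gscale l a) = gscale (k * l) a.
Proof. by apply/ffunP=> g; rewrite !ffunE mulrA. Qed.

Lemma gscale0 (k : algC) : gscale k (0 : {ffun gT -> algC}) = 0.
Proof. by apply/ffunP=> g; rewrite !ffunE mulr0. Qed.

Lemma gscale0l a : gscale 0 a = 0.
Proof. by apply/ffunP=> g; rewrite !ffunE mul0r. Qed.

Lemma gscale1 a : gscale 1 a = a.
Proof. by apply/ffunP=> g; rewrite !ffunE mul1r. Qed.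

Lemma eHE (H : {set gT}) g : eH H g = if g \in H then (#|H|%:R)^-1 else 0.
Proof.
rewrite /eH ffunE sum_ffunE.
rewrite (eq_bigr (fun h => (g == h)%:R)); last by move=> h _; rewrite ffunE.
case: ifP => gH.
  by rewrite (bigD1 g) //= eqxx big1 ?addr0 ?mulr1 // => h /andP[_ /negPf]; rewrite eq_sym => ->.
by rewrite big1 ?mulr0 // => h hH; case: eqP => // eg; rewrite -eg gH in hH.
Qed.

Lemma eH_mul (A B : {group gT}) : gmul (eH A) (eH B) = eH (A * B)%g.
Proof.
apply/ffunP=> g; rewrite ffunE eHE.
under eq_bigr do rewrite !eHE.
case: (boolP (g \in A * B)%g) => [/mulsgP[a b aA bB ->] | ngAB].
  rewrite (reindex_inj (mulgI a)) /=.
  rewrite (eq_bigr (fun k => if k \in A :&: B then (#|A|%:R)^-1 * (#|B|%:R)^-1 else 0)); last first.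
    move=> k _; rewrite groupMl // invMg -!mulgA mulKg inE groupMr // groupV.
    by case: (k \in A); case: (k \in B); rewrite ?mulr0 ?mul0r.
  rewrite -big_mkcond /= sumr_const.
  have := mul_cardG A B; move/(congr1 (fun m => m%:R : algC)); rewrite !natrM => h.
  have hA : (#|A|%:R : algC) != 0 by rewrite pnatr_eq0 -lt0n cardG_gt0.
  have hB : (#|B|%:R : algC) != 0 by rewrite pnatr_eq0 -lt0n cardG_gt0.
  have hI : (#|A :&: B|%:R : algC) != 0.
    by rewrite pnatr_eq0 -lt0n card_gt0; apply/set0Pn; exists 1%g; rewrite inE !group1.
  have hAB : (#|(A * B)%g|%:R : algC) != 0.
    by rewrite pnatr_eq0 -lt0n card_gt0; apply/set0Pn; exists (a * b)%g; apply: mem_mulg.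
  rewrite -mulr_natr.
  have eAB : (#|(A*B)%g|%:R : algC) = #|A|%:R * #|B|%:R / #|A :&: B|%:R by rewrite h mulfK.
  rewrite eAB; field.
  by rewrite hA hB hI.
rewrite big1 // => h _; case: ifP => hA; case: ifP => hB; rewrite ?mulr0 ?mul0r //.
by case/negP: ngAB; rewrite -(mulKVg h g); apply: mem_mulg.
Qed.


Definition adj (a : {ffun gT -> algC}) : {ffun gT -> algC} := [ffun g => (a (g^-1)%g)^*].

Lemma adjK a : adj (adj a) = a.
Proof. by apply/ffunP=> g; rewrite !ffunE invgK conjCK. Qed.

Lemma adjD a b : adj (a + b) = adj a + adj b.
Proof. by apply/ffunP=> g; rewrite !ffunE rmorphD. Qed.

Lemma adjN a : adj (- a) = - adj a.
Proof. by apply/ffunP=> g; rewrite !ffunE rmorphN. Qed.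

Lemma adjB a b : adj (a - b) = adj a - adj b.
Proof. by rewrite adjD adjN. Qed.

Lemma adj_mul a b : adj (gmul a b) = gmul (adj b) (adj a).
Proof.
apply/ffunP=> g; rewrite !ffunE rmorph_sum /= (reindex_inj (mulgI (g^-1)%g)) /=.
apply: eq_bigr => h _; rewrite !ffunE rmorphM mulrC /=.
by rewrite !invMg !invgK mulgK.
Qed.

Lemma adj_eH (H : {group gT}) : adj (eH H) = eH H.
Proof.
apply/ffunP=> g; rewrite ffunE !eHE groupV.
by case: ifP => _; rewrite ?rmorph0 // fmorphV rmorph_nat.
Qed.

Lemma gpos a : gmul a (adj a) = 0 -> a = 0.
Proof.
move=> e0; have := congr1 (fun f : {ffun gT -> algC} => f 1%g) e0; rewrite !ffunE => h0.
have h1 : forall h, a h * (a h)^* = 0.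
  move=> h; apply: (@psumr_eq0P _ _ predT (fun h => a h * (a h)^*)) => //.
    by move=> i _; apply: mul_conjC_ge0.
  by apply: etrans h0; apply: eq_bigr => i _; rewrite ffunE mulg1 invgK.
by apply/ffunP=> h; rewrite ffunE; apply/eqP; rewrite -mul_conjC_eq0 h1.
Qed.

Lemma adj0 : adj (0 : {ffun gT -> algC}) = 0.
Proof. by apply/ffunP=> g; rewrite !ffunE rmorph0. Qed.

Lemma gcancel s z : adj s = s -> gmul s (gmul s z) = 0 -> gmul s z = 0.
Proof.
move=> hs h0; set y := gmul s z.
have : gmul (adj y) (adj (adj y)) = 0.
  by rewrite adjK /y adj_mul hs gmulA h0 gmulr0.
by move/gpos => hy; rewrite -[y]adjK hy adj0.
Qed.

Lemma iter_cancel s : adj s = s -> forall m y, iter m.+1 (gmul s) y = 0 -> gmul s y = 0.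
Proof.
move=> hs; elim=> [|m IH] y //= h; apply: IH; rewrite /=.
by apply: gcancel => //; rewrite -[iter m.+2 _ _]/(gmul s (gmul s (iter m (gmul s) y))) in h.
Qed.

Fixpoint hev (s : {ffun gT -> algC}) (cs : seq algC) : {ffun gT -> algC} :=
  match cs with [::] => 0 | c :: cs' => gscale c (gdelta 1%g) + gmul s (hev s cs') end.

Lemma hev_comm s cs : gmul s (hev s cs) = gmul (hev s cs) s.
Proof.
elim: cs => [|c cs IH] /=; first by rewrite gmulr0 gmul0r.
by rewrite gmulDr gmulDl gmulZr gmulZl gmulr1 gmul1r IH -gmulA IH.
Qed.

Lemma key_alg s : adj s = s -> forall (cs : seq algC) m, has (fun c : algC => c != 0) cs ->
  iter m (gmul s) (hev s cs) = 0 ->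
  exists t, s = gmul s (gmul s t) /\ gmul s t = gmul t s.
Proof.
move=> hs; elim=> [|c cs IH] m //= hc hz.
case: (eqVneq c 0) => [c0 | cn0].
  subst c; rewrite gscale0l add0r -iterSr in hz.
  by apply: (IH m.+1) => //; move: hc; rewrite eqxx.
have hy : gmul s (gscale c (gdelta 1%g) + gmul s (hev s cs)) = 0.
  case: m hz => [|m] hz; first by move: hz => /= ->; rewrite gmulr0.
  exact: (@iter_cancel s hs m _ hz).
rewrite gmulDr gmulZr gmulr1 in hy.
exists (gscale (- c^-1) (hev s cs)); split.
  rewrite gmulZr gmulZr -gmulA.
  have -> : gmul (gmul s s) (hev s cs) = - gscale c s by rewrite gmulA; apply/eqP; rewrite -addr_eq0 addrC hy.
  by apply/ffunP=> g; rewrite !ffunE mulrNN mulrA mulVf // mul1r.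
by rewrite gmulZr gmulZl hev_comm.
Qed.

Lemma gmul_sumr a n (F : 'I_n -> {ffun gT -> algC}) :
  gmul a (\sum_(i < n) F i) = \sum_(i < n) gmul a (F i).
Proof. by apply: (big_morph (gmul a)); [exact: gmulDr | exact: gmulr0]. Qed.

Lemma hev_sum s (cs : seq algC) :
  hev s cs = \sum_(i < size cs) gscale (cs`_i) (iter i (gmul s) (gdelta 1%g)).
Proof.
elim: cs => [|c cs IH] /=; first by rewrite big_ord0.
rewrite big_ord_recl /= IH gmul_sumr; congr (_ + _).
by apply: eq_bigr => i _; rewrite gmulZr.
Qed.

Lemma exists_cs s : exists cs : seq algC, has (fun r : algC => r != 0) cs /\ hev s cs = 0.
Proof.
pose N := #|gT|.
pose M := \matrix_(i < N.+1, j < N) (iter i (gmul s) (gdelta 1%g)) (enum_val j).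
have rk : \rank (kermx M) != 0%N.
  by rewrite mxrank_ker subn_eq0 -ltnNge ltnS rank_leq_col.
have [k hk] : exists k, row k (kermx M) != 0.
  case: (pickP (fun k => row k (kermx M) != 0)) => [k hk|hn]; first by exists k.
  have K0 : kermx M = 0.
    by apply/row_matrixP => i; move/negbFE/eqP: (hn i) ->; rewrite row0.
  by rewrite K0 mxrank0 in rk.
set c := row k (kermx M) in hk.
have hc0 : c *m M = 0 by rewrite /c -row_mul mulmx_ker row0.
have [j hj] : exists j, c 0 j != 0.
  case: (pickP (fun j => c 0 j != 0)) => [j hj|hn]; first by exists j.
  by case/negP: hk; apply/eqP/rowP => j0; rewrite [RHS]mxE; apply/eqP; move/negbFE: (hn j0).
exists (mkseq (fun i => c 0 (inord i)) N.+1); split.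
  apply/hasP; exists (c 0 j) => //; apply/mapP; exists (nat_of_ord j).
    by rewrite mem_iota leq0n add0n ltn_ord.
  by rewrite inord_val.
rewrite hev_sum size_mkseq; apply/ffunP => g; rewrite sum_ffunE ffunE.
have := congr1 (fun A : 'M_(1, N) => A 0 (enum_rank g)) hc0; rewrite !mxE => h; apply: (etrans _ h).
by apply: eq_bigr => i _; rewrite ffunE nth_mkseq // inord_val /M [X in _ = _ * X]mxE enum_rankK.
Qed.

Lemma x_in_sA x : exists c, x = gmul (gmul x (adj x)) c.
Proof.
set s := gmul x (adj x).
have hs : adj s = s by rewrite /s adj_mul adjK.
have [cs [hc hz]] := exists_cs s.
have [t [ht htc]] := @key_alg s hs cs 0 hc hz.
set u := x - gmul t (gmul s x).
have tss : gmul t (gmul s s) = s.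
  by rewrite -gmulA -htc gmulA -htc -ht.
have hu1 : gmul u (adj x) = 0.
  by rewrite /u gmulBl gmulA [gmul (gmul s x) _]gmulA -/s tss subrr.
have hu : u = 0.
  apply: gpos; rewrite /u adjB gmulBr -/u hu1 sub0r adj_mul adj_mul hs.
  by rewrite -gmulA -gmulA hu1 !gmul0r oppr0.
exists (gmul t x); rewrite -gmulA htc gmulA.
by apply/eqP; rewrite -subr_eq0 -/u hu.
Qed.

End GA.


Section Abstract.
Variable gT : finGroupType.
Variables U V U' V' : {group gT}.
Hypothesis G1 : (U' :=: (V :&: U') * (U' :&: U))%g.
Hypothesis G2 : (V' :=: (V' :&: U) * (V :&: V'))%g.
Hypothesis G3 : (U :=: (U' :&: U) * (V' :&: U))%g.
Hypothesis G4 : (V :=: (V :&: V') * (V :&: U'))%g.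

Local Notation A := {ffun gT -> algC}.
Let E := eH V. Let F := eH U. Let P := eH U'. Let Q := eH V'.
Let E1 := eH (V :&: V'). Let E2 := eH (V :&: U').

Lemma eHmT (X Y : {group gT}) (y : A) : gmul (eH X) (gmul (eH Y) y) = gmul (eH (X * Y)%g) y.
Proof. by rewrite -gmulA eH_mul. Qed.

Lemma hP : P = gmul (eH (V :&: U')) (eH (U' :&: U)).
Proof. by rewrite eH_mul /P -G1. Qed.
Lemma hQ : Q = gmul (eH (V' :&: U)) E1.
Proof. by rewrite eH_mul /Q -G2. Qed.
Lemma hF : F = gmul (eH (U' :&: U)) (eH (V' :&: U)).
Proof. by rewrite eH_mul /F -G3. Qed.
Lemma hE : E = gmul E1 E2.
Proof. by rewrite eH_mul /E -G4. Qed.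
Lemma EE2 y : gmul E (gmul E2 y) = gmul E y.
Proof. by rewrite eHmT mulGSid ?subsetIl. Qed.
Lemma E2P y : gmul E2 (gmul P y) = gmul P y.
Proof. by rewrite eHmT mulSGid ?subsetIr. Qed.
Lemma QE1 y : gmul Q (gmul E1 y) = gmul Q y.
Proof. by rewrite eHmT mulGSid ?subsetIr. Qed.
Lemma PP y : gmul P (gmul P y) = gmul P y.
Proof. by rewrite eHmT mulGid. Qed.
Lemma FF y : gmul F (gmul F y) = gmul F y.
Proof. by rewrite eHmT mulGid. Qed.

Lemma EPQ y : gmul E (gmul P (gmul Q y)) = gmul E (gmul F (gmul E1 y)).
Proof.
rewrite hP hQ hF !gmulA EE2.
by [].
Qed.

Lemma abs_wd x : in_lideal (gmul P Q) x -> in_lideal (gmul E F) (gmul E x).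
Proof.
case=> y ->; exists (gmul E1 y).
by rewrite !gmulA EPQ.
Qed.

Lemma abs_inj x x' : in_lideal (gmul P Q) x -> in_lideal (gmul P Q) x' ->
  gmul E x = gmul E x' -> x = x'.
Proof.
case=> y -> [y' ->] hE0; apply/eqP; rewrite -subr_eq0; apply/eqP.
rewrite -gmulBr; set b := y - y'.
have hEd : gmul E (gmul (gmul P Q) b) = 0 by rewrite /b gmulBr gmulBr hE0 subrr.
have hE1 : gmul E1 (gmul P (gmul Q b)) = 0.
  by rewrite -E2P -gmulA -hE -hEd gmulA.
have hQd : gmul Q (gmul P (gmul Q b)) = 0 by rewrite -QE1 hE1 gmulr0.
have : gmul (adj (gmul (gmul P Q) b)) (adj (adj (gmul (gmul P Q) b))) = 0.
  rewrite adjK !adj_mul /P /Q !adj_eH -/P -/Q !gmulA PP hQd.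
  by rewrite gmulr0.
by move/gpos => h; rewrite -[LHS]adjK h adj0.
Qed.

Lemma abs_surj z : in_lideal (gmul E F) z ->
  exists2 x, in_lideal (gmul P Q) x & gmul E x = z.
Proof.
case=> y ->.
have [c hc] := x_in_sA (gmul E F).
rewrite adj_mul /E /F !adj_eH -/E -/F !gmulA FF in hc.
exists (gmul (gmul P Q) (gmul E2 (gmul c y))); first by exists (gmul E2 (gmul c y)).
rewrite [in RHS]hc !gmulA EPQ -[gmul E1 (gmul E2 _)]gmulA -hE.
by [].
Qed.

End Abstract.


Section Mat.
Variables (n : nat) (R : finComUnitRingType).
Local Notation G := {'GL_n.+1[R]}.
Local Notation Ix := 'I_n.+1.

Definition Nrel (r : rel Ix) : {set G} :=
  [set g : G | [forall i : Ix, forall j : Ix, (GLval g i j == ((i == j)%:R : R)) || r i j]].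

Lemma NrelP (r : rel Ix) (g : G) :
  reflect (forall i j, (GLval g i j == ((i == j)%:R : R)) || r i j) (g \in Nrel r).
Proof.
rewrite inE; apply: (iffP forallP) => h i; last by apply/forallP => j; apply: h.
by move=> j; move/forallP: (h i); apply.
Qed.

Lemma eq_Nrel (r r' : rel Ix) : r =2 r' -> Nrel r = Nrel r'.
Proof.
move=> h; apply/setP => g; rewrite !inE.
by apply: eq_forallb => i; apply: eq_forallb => j; rewrite h.
Qed.

Lemma NrelI (r r' : rel Ix) : Nrel r :&: Nrel r' = Nrel (fun i j => r i j && r' i j).
Proof.
apply/setP => g; rewrite inE; apply/andP/NrelP => [[/NrelP h1 /NrelP h2] i j | h].
  by rewrite orb_andr h1 h2.
by split; apply/NrelP => i j; move: (h i j); rewrite orb_andr => /andP[].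
Qed.

Lemma NrelS (r r' : rel Ix) : (forall i j, r i j -> r' i j) -> Nrel r \subset Nrel r'.
Proof.
move=> h; apply/subsetP => g /NrelP hg; apply/NrelP => i j.
by case/orP: (hg i j) => [->|/h ->]; rewrite ?orbT.
Qed.

Lemma Nrel_group (r : rel Ix) : irreflexive r -> transitive r -> group_set (Nrel r).
Proof.
move=> irr tr; apply/group_setP; split.
  by apply/NrelP => i j; rewrite GL_1E !mxE eqxx.
move=> x y /NrelP hx /NrelP hy; apply/NrelP => i j.
case rij: (r i j); first by rewrite orbT.
rewrite orbF GL_MxE.
have ht : forall k, GLval x i k * GLval y k j = (i == k)%:R * (k == j)%:R :> R.
  move=> k; move: (hx i k) (hy k j).
  case rik: (r i k); case rkj: (r k j); rewrite ?orbT ?orbF.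
  - by rewrite (tr _ _ _ rik rkj) in rij.
  - move=> _ /eqP ->; case: eqP => [ekj|]; last by rewrite !mulr0.
    by rewrite -ekj rik in rij.
  - move=> /eqP -> _; case: eqP => [eik|]; last by rewrite !mul0r.
    by rewrite eik rkj in rij.
  - by move=> /eqP -> /eqP ->.
have -> : (GLval x *m GLval y) i j = ((1%:M : 'M[R]_n.+1) *m 1%:M) i j.
  by rewrite !mxE; apply: eq_bigr => k _; rewrite ht !mxE.
by rewrite mul1mx mxE.
Qed.

Lemma GLinv_perm (w : G) (s : 'S_n.+1) :
  GLval w = perm_mx s -> GLval (w^-1)%g = perm_mx s^-1.
Proof.
move=> hw; have hu := GL_unit w.
have h1 : GLval w *m perm_mx s^-1 = 1%:M by rewrite hw -perm_mxM mulgV perm_mx1.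
rewrite GL_VE; apply: (mulrI hu).
by rewrite divrr //; symmetry; exact: h1.
Qed.

Lemma conj_Nrel (r : rel Ix) (w : G) (s : 'S_n.+1) : GLval w = perm_mx s ->
  (Nrel r :^ w)%g = Nrel (fun i j => r (s^-1 i)%g (s^-1 j)%g).
Proof.
move=> hw; have hwi := GLinv_perm hw.
apply/setP => g; rewrite mem_conjg.
have E : forall i j, GLval (g ^ w^-1)%g i j = GLval g (s i) (s j).
  move=> i j; rewrite /conjg invgK !GL_MxE hwi hw.
  by rewrite -row_permE -col_permE !mxE.
apply/NrelP/NrelP => h i j.
  have := h (s^-1 i)%g (s^-1 j)%g; rewrite E !permKV.
  by rewrite (inj_eq (@perm_inj _ s^-1)).
have := h (s i) (s j); rewrite -E !permK.
by rewrite (inj_eq (@perm_inj _ s)).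
Qed.

Definition Mset (r : rel Ix) : {set 'M[R]_n.+1} :=
  [set M : 'M[R]_n.+1 | [forall i : Ix, forall j : Ix, (M i j == ((i == j)%:R : R)) || r i j]].

Definition toM (f : {ffun Ix * Ix -> R}) : 'M[R]_n.+1 :=
  \matrix_(i, j) ((i == j)%:R + f (i, j)).

Lemma card_Mset (r : rel Ix) :
  #|Mset r| = (#|R| ^ #|[set p : Ix * Ix | r p.1 p.2]|)%N.
Proof.
rewrite -(card_pffun_on (0 : R)).
have inj : injective toM.
  move=> f g /matrixP h; apply/ffunP => [[i j]].
  by move: (h i j); rewrite !mxE => /addrI.
rewrite -(card_imset _ inj); apply: eq_card => M.
apply/idP/imsetP.
  move=> hM; exists [ffun p : Ix * Ix => M p.1 p.2 - (p.1 == p.2)%:R].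
    apply/pffun_onP; split => //; apply/supportP => [[i j]]; rewrite inE /= => nr.
    rewrite ffunE /=; move: hM; rewrite inE => /forallP/(_ i)/forallP/(_ j).
    by rewrite (negPf nr) orbF => /eqP ->; rewrite subrr.
  by apply/matrixP => i j; rewrite !mxE ffunE /= addrC subrK.
case=> f /pffun_onP [/supportP hf _] ->; rewrite inE.
apply/forallP => i; apply/forallP => j; rewrite mxE.
case rij: (r i j); rewrite ?orbT // orbF hf ?addr0 //.
by rewrite inE /= rij.
Qed.

Lemma card_Nrel (r : rel Ix) :
  (forall i j, r i j -> (i < j)%N) \/ (forall i j, r i j -> (j < i)%N) ->
  #|Nrel r| = (#|R| ^ #|[set p : Ix * Ix | r p.1 p.2]|)%N.
Proof.
have vinj : injective (@GLval n.+1 R) by exact: val_inj.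
move=> htri; rewrite -card_Mset -(card_imset _ vinj).
apply: eq_card => M; apply/imsetP/idP.
  by case=> g /NrelP hg ->; rewrite inE; apply/forallP => i; apply/forallP => j; apply: hg.
move=> hM; have hM' := hM; rewrite inE in hM'.
have ent : forall i j, M i j = (i == j)%:R \/ r i j.
  by move=> i j; move/forallP/(_ i)/forallP/(_ j): hM' => /orP[/eqP|]; [left|right].
have lowtrig : forall N : 'M[R]_n.+1, (forall i j : Ix, (i < j)%N -> N i j = 0) ->
    (forall i, N i i = 1) -> \det N = 1.
  move=> N h0 h1; rewrite det_trig; last first.
    by apply/forallP => i; apply/forallP => j; apply/implyP => /h0 ->.
  by rewrite big1 // => i _; rewrite h1.
have diag1 : forall i, M i i = 1.
  move=> i; case: (ent i i) => [->|rii]; first by rewrite eqxx.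
  by case: htri => h; move: (h _ _ rii); rewrite ltnn.
have hdet : \det M = 1.
  case: htri => h.
    rewrite -det_tr; apply: lowtrig => [i j lij|i]; last by rewrite mxE diag1.
    rewrite mxE; case: (ent j i) => [->|/h]; last by rewrite ltnNge ltnW.
    by case: eqP => // eji; rewrite eji ltnn in lij.
  apply: lowtrig => [i j lij|i]; last by rewrite diag1.
  case: (ent i j) => [->|/h]; last by rewrite ltnNge ltnW.
  by case: eqP => // eij; rewrite eij ltnn in lij.
have hu : M \in unitmx by rewrite unitmxE hdet unitr1.
exists (Sub M hu : G); last by rewrite SubK.
by apply/NrelP => i j; rewrite SubK; move/forallP/(_ i)/forallP/(_ j): hM'.
Qed.

Lemma decompN (r : rel Ix) (p : Ix -> Ix) : injective p ->
  ((forall i j, r i j -> (i < j)%N) \/ (forall i j, r i j -> (j < i)%N)) -> transitive r ->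
  Nrel r = (Nrel (fun i j => r i j && (p i < p j)%N) * Nrel (fun i j => r i j && (p j < p i)%N))%g.
Proof.
move=> pinj htri tr.
have irr : irreflexive r.
  by move=> i; apply/negP => rii; case: htri => h; move: (h _ _ rii); rewrite ltnn.
have gA : group_set (Nrel (fun i j => r i j && (p i < p j)%N)).
  apply: Nrel_group; first by move=> i /=; rewrite irr.
  move=> j i k /= /andP[r1 t1] /andP[r2 t2].
  by rewrite (tr _ _ _ r1 r2) (ltn_trans t1 t2).
have gB : group_set (Nrel (fun i j => r i j && (p j < p i)%N)).
  apply: Nrel_group; first by move=> i /=; rewrite irr.
  move=> j i k /= /andP[r1 t1] /andP[r2 t2].
  by rewrite (tr _ _ _ r1 r2) (ltn_trans t2 t1).
have gH : group_set (Nrel r) by apply: Nrel_group.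
have hc := mul_cardG (Group gA) (Group gB); rewrite /= NrelI in hc.
have htriA : forall q : rel Ix, (forall i j, q i j -> r i j) ->
    (forall i j, q i j -> (i < j)%N) \/ (forall i j, q i j -> (j < i)%N).
  by move=> q hq; case: htri => h; [left|right] => i j /hq /h.
rewrite !card_Nrel in hc; try by apply: htriA => i j; rewrite -?andbA => /andP[-> _].
have e0 : #|[set q : Ix * Ix | (r q.1 q.2 && (p q.1 < p q.2)%N) && (r q.1 q.2 && (p q.2 < p q.1)%N)]| = 0%N.
  apply: eq_card0 => q; rewrite inE.
  by apply/negP => /andP[/andP[_ l1] /andP[_ l2]]; move: (ltn_trans l1 l2); rewrite ltnn.
rewrite e0 expn0 muln1 -expnD in hc.
have hsum : (#|[set q : Ix * Ix | r q.1 q.2 && (p q.1 < p q.2)%N]| +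
             #|[set q : Ix * Ix | r q.1 q.2 && (p q.2 < p q.1)%N]|)%N =
            #|[set q : Ix * Ix | r q.1 q.2]|.
  rewrite -(cardsID [set q : Ix * Ix | (p q.1 < p q.2)%N] [set q : Ix * Ix | r q.1 q.2]).
  congr (_ + _)%N; apply: eq_card => q; rewrite !inE //.
  case rq: (r q.1 q.2); last by rewrite andbF.
  rewrite andbT /= -leqNgt ltn_neqAle; case: eqP => // e.
  by move: rq; rewrite (pinj _ _ (ord_inj e)) irr.
rewrite hsum -(card_Nrel htri) in hc.
apply/eqP; rewrite eq_sym eqEcard; apply/andP; split.
  have hH := mulGid (Group gH); rewrite /= in hH.
  apply: (subset_trans (@mulgSS _ _ (Nrel r) _ (Nrel r) _ _)).
  - by apply: NrelS => i j /andP[].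
  - by apply: NrelS => i j /andP[].
  by rewrite hH.
by rewrite -hc.
Qed.

End Mat.
Arguments Nrel {n R} r.
Arguments NrelI {n R} r r'.
Arguments eq_Nrel {n R r r'}.
Arguments Nrel_group {n R r}.
Arguments decompN {n R r p}.


Section Spec.
Variables (n : nat) (R : finComUnitRingType).
Local Notation G := {'GL_n.+1[R]}.
Local Notation Ix := 'I_n.+1.

Lemma upperUE : upperU n R = Nrel (fun i j : Ix => (i < j)%N).
Proof. by []. Qed.
Lemma lowerVE : lowerV n R = Nrel (fun i j : Ix => (j < i)%N).
Proof. by []. Qed.

Lemma gU : group_set (upperU n R).
Proof. by rewrite upperUE; apply: Nrel_group => [i|]; [rewrite ltnn | exact: ltn_trans]. Qed.
Lemma gV : group_set (lowerV n R).
Proof.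
rewrite lowerVE; apply: Nrel_group => [i|j i k /= h1 h2]; first by rewrite ltnn.
exact: ltn_trans h2 h1.
Qed.

Lemma G3gen (w : G) (s : 'S_n.+1) : GLval w = perm_mx s ->
  upperU n R = ((upperU n R :^ w :&: upperU n R) * (lowerV n R :^ w :&: upperU n R))%g.
Proof.
move=> hw; rewrite upperUE lowerVE !(conj_Nrel _ hw) !NrelI.
rewrite {1}(@decompN n R (fun i j : Ix => (i < j)%N) (fun i => (s^-1)%g i) (@perm_inj _ _)); first last.
- exact: ltn_trans.
- by left.
by congr (_ * _)%g; apply: eq_Nrel => i j /=; rewrite andbC.
Qed.

Lemma G4gen (w : G) (s : 'S_n.+1) : GLval w = perm_mx s ->
  lowerV n R = ((lowerV n R :&: upperU n R :^ w) * (lowerV n R :&: lowerV n R :^ w))%g.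
Proof.
move=> hw; rewrite upperUE lowerVE !(conj_Nrel _ hw) !NrelI.
rewrite {1}(@decompN n R (fun i j : Ix => (j < i)%N) (fun i => (s^-1)%g i) (@perm_inj _ _)); first last.
- by move=> j i k h1 h2; exact: ltn_trans h2 h1.
- by right.
by [].
Qed.

Lemma diag_mulE (K A : 'M[R]_n.+1) i j : is_diag_mx K ->
  (K *m A) i j = K i i * A i j /\ (A *m K) i j = A i j * K j j.
Proof.
move/is_diag_mxP => hK; split; rewrite mxE.
  rewrite (bigD1 i) // big1; first by rewrite [LHS]addr0.
  by move=> l /andP[_ nl]; rewrite hK ?mul0r // eq_sym.
rewrite (bigD1 j) // big1; first by rewrite [LHS]addr0.
by move=> l /andP[_ nl]; rewrite hK ?mulr0.
Qed.

Lemma diag_unit (k : G) i : k \in diagL n R -> GLval k i i \is a GRing.unit.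
Proof.
rewrite inE => hk; apply/unitrPr; exists (GLval (k^-1)%g i i).
have := congr1 (fun M : 'M[R]_n.+1 => M i i) (congr1 GLval (mulgV k)).
rewrite GL_MxE GL_1E => h.
by move: (diag_mulE (GLval (k^-1)%g) i i hk) => [<- _]; rewrite h mxE eqxx.
Qed.

Lemma diag_norm (k : G) : k \in diagL n R -> (lowerV n R :^ k)%g = lowerV n R.
Proof.
move=> hk; apply/eqP; rewrite eq_sym eqEcard cardJg leqnn andbT.
apply/subsetP => y hy; rewrite mem_conjg.
set z := (y ^ k^-1)%g.
have hzk : (z * k)%g = (k * y)%g by rewrite /z conjgE invgK -!mulgA mulVg mulg1.
have ent : forall i j, GLval z i j * GLval k j j = GLval k i i * GLval y i j.
  move=> i j; have e : (GLval z *m GLval k) i j = (GLval k *m GLval y) i j.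
    by rewrite -!GL_MxE hzk.
  have hk' := hk; rewrite inE in hk'.
  by case: (diag_mulE (GLval z) i j hk') => _ <-; case: (diag_mulE (GLval y) i j hk') => <- _.
rewrite lowerVE in hy *; apply/NrelP => i j; move/NrelP: hy => /(_ i j).
case: (ltnP j i) => [_|_]; rewrite ?orbT // !orbF => /eqP hyij.
apply/eqP; have hu := diag_unit i hk; have hj := diag_unit j hk.
move: (ent i j); rewrite hyij; case: eqP => [e|_].
  by subst j; rewrite mulr1 -{2}(mul1r (GLval k i i)) => /(mulIr hu).
by rewrite mulr0 -(mul0r (GLval k j j)) => /(mulIr hj).
Qed.

End Spec.


Lemma mulC_eq (gT : finGroupType) (A B C : {group gT}) : (C :=: A * B)%g -> (C :=: B * A)%g.
Proof. by move=> e; rewrite -invMG -e invGid. Qed.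

Lemma eH_comm (gT : finGroupType) (H : {group gT}) (Ls : {set gT}) (a : {ffun gT -> algC}) :
  (forall k, k \in Ls -> (H :^ k)%g = H) -> supported_on Ls a ->
  gmul (eH H) a = gmul a (eH H).
Proof.
move=> hn ha; apply/ffunP => g; rewrite !ffunE.
have inj : injective (fun k : gT => (g * k^-1)%g).
  by move=> k1 k2 /= /mulgI /invg_inj.
rewrite (reindex_inj inj) /=; apply: eq_bigr => k _.
rewrite invMg invgK -mulgA mulVg mulg1.
case: (boolP (k \in Ls)) => hk; last by rewrite ha // mulr0 mul0r.
rewrite mulrC !eHE.
have -> : (k^-1 * g)%g = ((g * k^-1) ^ k)%g by rewrite conjgE mulgKV.
by rewrite -{3}(hn k hk) memJ_conjg.
Qed.

Theorem lemma3p5 (R : finComUnitRingType) (n : nat) (hloc : local_ring R)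
  (w : {'GL_n.+1[R]}) (hw : w \in permW n R) :
  let U := upperU n R in
  let V := lowerV n R in
  let Uw := (U :^ w)%g in   (* w^-1 U w *)
  let Vw := (V :^ w)%g in   (* w^-1 V w *)
  let dom := in_lideal (gmul (eH Uw) (eH Vw)) in
  let cod := in_lideal (gmul (eH V) (eH U)) in
  let phi := gmul (eH V) in
  (* well-defined *)
  (forall x, dom x -> cod (phi x)) /\
  (* injective on the domain *)
  (forall x y, dom x -> dom y -> phi x = phi y -> x = y) /\
  (* surjective onto the codomain *)
  (forall z, cod z -> exists2 x, dom x & phi x = z) /\
  (* C-linear *)
  (forall (c : algC) x y, dom x -> dom y -> phi (gscale c x + y) = gscale c (phi x) + phi y) /\
  (* left C[L]-linear *)
  (forall a x, supported_on (diagL n R) a -> dom x ->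
     phi (gmul a x) = gmul a (phi x)) /\
  (* right C[G]-linear *)
  (forall x b, dom x -> phi (gmul x b) = gmul (phi x) b).
Proof.
move=> U V Uw Vw dom cod phi.
have [s hs] : exists s, GLval w = perm_mx s by move: hw; rewrite inE => /is_perm_mxP.
have hsi := GLinv_perm hs.
pose Ug := Group (gU n R). pose Vg := Group (gV n R).
have G3 : (U :=: (Uw :&: U) * (Vw :&: U))%g by exact: G3gen hs.
have G4 : (V :=: (V :&: Vw) * (V :&: Uw))%g.
  apply: (@mulC_eq _ (Vg :&: Ug :^ w)%G (Vg :&: Vg :^ w)%G Vg).
  exact: G4gen hs.
have G1 : (Uw :=: (V :&: Uw) * (Uw :&: U))%g.
  have e := congr1 (fun X => X :^ w)%g (G3gen hsi).
  rewrite /= conjsMg !conjIg !conjsgKV in e.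
  rewrite [Uw :&: U]setIC.
  by apply: (@mulC_eq _ (Ug :&: Ug :^ w)%G (Vg :&: Ug :^ w)%G (Ug :^ w)%G).
have G2 : (Vw :=: (Vw :&: U) * (V :&: Vw))%g.
  have e := congr1 (fun X => X :^ w)%g (G4gen hsi).
  rewrite /= conjsMg !conjIg !conjsgKV in e.
  by rewrite [V :&: Vw]setIC.
split; first by move=> x hx; apply: (@abs_wd _ Ug Vg (Ug :^ w)%G (Vg :^ w)%G).
split; first by move=> x y hx hy; apply: (@abs_inj _ Vg (Ug :^ w)%G (Vg :^ w)%G).
split; first by move=> z hz; apply: (@abs_surj _ Ug Vg (Ug :^ w)%G (Vg :^ w)%G).
split; first by move=> c x y _ _; rewrite /phi gmulDr gmulZr.
split; last by move=> x b _; rewrite /phi gmulA.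
move=> a x ha _; rewrite /phi -!gmulA; congr (gmul _ x).
by apply: (@eH_comm _ Vg (diagL n R)) => // k hk; apply: diag_norm.
Qed.
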